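(* Set $\lambda_*=1/\tau^2$. Along the branch of the discrete Neumann correspondence $\mathfrak B_r$ for which $\Gamma=\frac1\tau\mathbf I_r+O(\tau)$ as $\tau\to0$, one has $$\Gamma=\frac1\tau\mathbf I_r-\frac\tau2\big(X^TAX+P^TP\big)+O(\tau^2),$$ and, writing $\tilde X=X+\tau\dot X+O(\tau^2)$, $\tilde P=P+\tau\dot P+O(\tau^2)$, the first-order terms satisfy the continuous Neumann system with Euclidean metric $$\dot X=P,\qquad \dot P=AX+X\Lambda,\qquad \Lambda=-X^TAX-P^TP.$$
   Context: $A=\mathrm{diag}(a_1,\dots,a_n)$, $A(\lambda)=\lambda\mathbf I_n-A$, $A^{\pm1/2}(\lambda_* )$ the diagonal matrices with entries $(\lambda_*-a_i)^{\pm1/2}$ (positive for large real $\lambda_*$). $(X,P)$ are $n\times r$ matrices with $X^TX=\mathbf I_r$, $X^TP+P^TX=0$. The discrete Neumann correspondence is $\tilde X=A^{-1/2}(\lambda_* )(P+X\Gamma)$, $\tilde P=-A^{1/2}(\lambda_* )X+A^{-1/2}(\lambda_* )(P+X\Gamma)\Gamma$, where $\Gamma$ is a symmetric $r\times r$ solution of $\Gamma\mathbf U\Gamma+\Gamma\mathbf V+\mathbf V^T\Gamma-\mathbf W=0$ with $\mathbf U=X^TA^{-1}(\lambda_* )X$, $\mathbf V=X^TA^{-1}(\lambda_* )P$, $\mathbf W=\mathbf I_r-P^TA^{-1}(\lambda_* )P$. *)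

(* Defs.v *)
From HB Require Import structures.
From mathcomp Require Import all_boot all_order all_algebra.
Set Implicit Arguments. Unset Strict Implicit. Unset Printing Implicit Defensive.
Import Order.TTheory GRing.Theory Num.Theory.
Local Open Scope ring_scope.

Section Neumann.
Variables (R : rcfType) (n r : nat).

Definition Amat (a : 'rV[R]_n) : 'M[R]_n := diag_mx a.

Definition Alam (a : 'rV[R]_n) (lam : R) : 'M[R]_n := lam%:M - Amat a.

(* A^{1/2}(lambda), A^{-1/2}(lambda): diagonal, entries (lambda - a_i)^{+-1/2},
   positive square roots (meaningful when lambda > a_i). *)
Definition Ahalf (a : 'rV[R]_n) (lam : R) : 'M[R]_n :=
  diag_mx (\row_i Num.sqrt (lam - a 0 i)).
Definition Aminushalf (a : 'rV[R]_n) (lam : R) : 'M[R]_n :=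
  diag_mx (\row_i (Num.sqrt (lam - a 0 i))^-1).

Definition Umat (a : 'rV[R]_n) (lam : R) (X : 'M[R]_(n, r)) : 'M[R]_r :=
  X^T *m invmx (Alam a lam) *m X.
Definition Vmat (a : 'rV[R]_n) (lam : R) (X P : 'M[R]_(n, r)) : 'M[R]_r :=
  X^T *m invmx (Alam a lam) *m P.
Definition Wmat (a : 'rV[R]_n) (lam : R) (P : 'M[R]_(n, r)) : 'M[R]_r :=
  1%:M - P^T *m invmx (Alam a lam) *m P.

Definition riccati (a : 'rV[R]_n) (lam : R) (X P : 'M[R]_(n, r)) (G : 'M[R]_r) : Prop :=
  G^T = G /\
  G *m Umat a lam X *m G + G *m Vmat a lam X P + (Vmat a lam X P)^T *m G
    - Wmat a lam P = 0.

Definition Xtilde (a : 'rV[R]_n) (lam : R) (X P : 'M[R]_(n, r)) (G : 'M[R]_r)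
  : 'M[R]_(n, r) := Aminushalf a lam *m (P + X *m G).
Definition Ptilde (a : 'rV[R]_n) (lam : R) (X P : 'M[R]_(n, r)) (G : 'M[R]_r)
  : 'M[R]_(n, r) :=
  - (Ahalf a lam *m X) + Aminushalf a lam *m (P + X *m G) *m G.

End Neumann.

(* f(tau) = O(tau^k) as tau -> 0+ (entrywise, equivalently in any norm). *)
Definition bigO (R : rcfType) (m p : nat) (f : R -> 'M[R]_(m, p)) (k : nat) : Prop :=
  exists C delta : R, 0 < delta /\
    forall tau : R, 0 < tau -> tau < delta ->
      forall i j, `|f tau i j| <= C * tau ^+ k.

(* Main.v *)
Require Import Defs.
From HB Require Import structures.
From mathcomp Require Import all_boot all_order all_algebra.
From mathcomp Require Import ring lra.
Import Order.TTheory GRing.Theory Num.Theory.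
Local Open Scope ring_scope.

Section Oh.
Variable R : rcfType.

Lemma bigO_pos m p (f : R -> 'M[R]_(m,p)) k : bigO f k ->
  exists C d : R, [/\ 0 <= C, 0 < d, d <= 1 &
   forall t, 0 < t -> t < d -> forall i j, `|f t i j| <= C * t ^+ k].
Proof.
move=> [C [d [d0 H]]].
exists (Num.max C 0), (Num.min d 1); split.
- by rewrite le_max lexx orbT.
- by rewrite lt_min d0 ltr01.
- by rewrite ge_min lexx orbT.
move=> t t0; rewrite lt_min => /andP[td t1] i j.
apply: (le_trans (H t t0 td i j)); apply: ler_wpM2r.
  by rewrite exprn_ge0 // ltW.
by rewrite le_max lexx.
Qed.

Lemma bigO_intro m p (f : R -> 'M[R]_(m,p)) k (C d : R) : 0 < d ->
  (forall t, 0 < t -> t < d -> forall i j, `|f t i j| <= C * t ^+ k) -> bigO f k.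
Proof. by move=> d0 H; exists C, d; split. Qed.

Lemma bigO_ext m p (f g : R -> 'M[R]_(m,p)) k (d : R) : 0 < d ->
  (forall t, 0 < t -> t < d -> f t = g t) -> bigO g k -> bigO f k.
Proof.
move=> d0 E /bigO_pos [C [d1 [C0 d10 _ H]]].
apply: (@bigO_intro _ _ _ _ C (Num.min d d1)); first by rewrite lt_min d0.
move=> t t0; rewrite lt_min => /andP[td td1] i j.
by rewrite E // H.
Qed.

Lemma bigO_add m p (f g : R -> 'M[R]_(m,p)) k :
  bigO f k -> bigO g k -> bigO (fun t => f t + g t) k.
Proof.
move=> /bigO_pos [C [d [C0 d0 _ H]]] /bigO_pos [C' [d' [C0' d0' _ H']]].
apply: (@bigO_intro _ _ _ _ (C + C') (Num.min d d')); first by rewrite lt_min d0.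
move=> t t0; rewrite lt_min => /andP[td td'] i j.
rewrite mxE mulrDl; apply: (le_trans (ler_normD _ _)).
by apply: lerD; [apply: H | apply: H'].
Qed.

Lemma bigO_opp m p (f : R -> 'M[R]_(m,p)) k :
  bigO f k -> bigO (fun t => - f t) k.
Proof.
move=> [C [d [d0 H]]]; exists C, d; split => // t t0 td i j.
by rewrite mxE normrN; apply: H.
Qed.

Lemma bigO_sub m p (f g : R -> 'M[R]_(m,p)) k :
  bigO f k -> bigO g k -> bigO (fun t => f t - g t) k.
Proof. by move=> Hf Hg; apply: bigO_add => //; apply: bigO_opp. Qed.

Lemma bigO_0 m p k : bigO (fun _ : R => (0 : 'M[R]_(m,p))) k.
Proof.
apply: (@bigO_intro _ _ _ _ 0 1) => // t t0 t1 i j.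
by rewrite mxE normr0 mul0r.
Qed.

Lemma bigO_cst m p (M : 'M[R]_(m,p)) : bigO (fun _ => M) 0.
Proof.
apply: (@bigO_intro _ _ _ _ (\sum_i \sum_j `|M i j|) 1) => // t t0 t1 i j.
rewrite expr0 mulr1 (bigD1 i) //= (bigD1 j) //= -addrA lerDl.
rewrite addr_ge0 // sumr_ge0 // => l _ //.
by rewrite sumr_ge0.
Qed.

Lemma bigO_scal m p (f : R -> 'M[R]_(m,p)) k (c : R) :
  bigO f k -> bigO (fun t => c *: f t) k.
Proof.
move=> /bigO_pos [C [d [C0 d0 _ H]]].
apply: (@bigO_intro _ _ _ _ (`|c| * C) d) => // t t0 td i j.
by rewrite mxE normrM -mulrA ler_wpM2l // H.
Qed.

Lemma bigO_tpow m p (f : R -> 'M[R]_(m,p)) k l :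
  bigO f k -> bigO (fun t => t ^+ l *: f t) (l + k).
Proof.
move=> /bigO_pos [C [d [C0 d0 _ H]]].
apply: (@bigO_intro _ _ _ _ C d) => // t t0 td i j.
rewrite mxE normrM normrX gtr0_norm // exprD mulrCA ler_wpM2l //.
  by rewrite exprn_ge0 // ltW.
exact: H.
Qed.

Lemma bigO_tinv m p (f : R -> 'M[R]_(m,p)) k l :
  bigO f (l + k) -> bigO (fun t => (t ^+ l)^-1 *: f t) k.
Proof.
move=> /bigO_pos [C [d [C0 d0 _ H]]].
apply: (@bigO_intro _ _ _ _ C d) => // t t0 td i j.
rewrite mxE normrM normrV ?unitfE ?expf_neq0 ?gt_eqF // normrX gtr0_norm //.
have tl : 0 < t ^+ l by rewrite exprn_gt0.
rewrite ler_pdivrMl // mulrCA -exprD; exact: H.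
Qed.

Lemma bigO_weak m p (f : R -> 'M[R]_(m,p)) k l :
  (k <= l)%N -> bigO f l -> bigO f k.
Proof.
move=> kl /bigO_pos [C [d [C0 d0 d1 H]]].
apply: (@bigO_intro _ _ _ _ C d) => // t t0 td i j.
apply: (le_trans (H t t0 td i j)); apply: ler_wpM2l => //.
apply: ler_wiXn2l => //; first exact: ltW.
by apply: ltW; apply: lt_le_trans d1.
Qed.

Lemma bigO_trmx m p (f : R -> 'M[R]_(m,p)) k :
  bigO f k -> bigO (fun t => (f t)^T) k.
Proof.
move=> [C [d [d0 H]]]; exists C, d; split => // t t0 td i j.
by rewrite mxE; apply: H.
Qed.

Lemma bigO_mul m p q (f : R -> 'M[R]_(m,p)) (g : R -> 'M[R]_(p,q)) k l :
  bigO f k -> bigO g l -> bigO (fun t => f t *m g t) (k + l).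
Proof.
move=> /bigO_pos [C [d [C0 d0 _ H]]] /bigO_pos [C' [d' [C0' d0' _ H']]].
apply: (@bigO_intro _ _ _ _ (p%:R * (C * C')) (Num.min d d')); first by rewrite lt_min d0.
move=> t t0; rewrite lt_min => /andP[td td'] i j.
rewrite mxE; apply: (le_trans (ler_norm_sum _ _ _)).
have -> : p%:R * (C * C') * t ^+ (k + l) = \sum_(s < p) (C * t ^+ k) * (C' * t ^+ l).
  rewrite sumr_const card_ord -mulr_natl exprD; ring.
apply: ler_sum => s _; rewrite normrM; apply: ler_pM => //.
exact: H. exact: H'.
Qed.

End Oh.

Arguments bigO_add {R m p f g k}.
Arguments bigO_ext {R m p f g k d}.
Arguments bigO_weak {R m p f k l}.
Arguments bigO_tpow {R m p f k} l.
Arguments bigO_tinv {R m p f k l}.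
Arguments bigO_opp {R m p f k}.
Arguments bigO_sub {R m p f g k}.
Arguments bigO_scal {R m p f k} c.
Arguments bigO_trmx {R m p f k}.
Arguments bigO_mul {R m p q f g k l}.
Arguments bigO_cst {R m p} M.

Section OhW.
Variable R : rcfType.
Variables (m p : nat).
Implicit Types f g : R -> 'M[R]_(m,p).

Lemma bigO_extW f g k (d : R) : bigO g k -> 0 < d ->
  (forall t, 0 < t -> t < d -> f t = g t) -> bigO f k.
Proof. by move=> Hg d0 E; apply: (bigO_ext d0 E Hg). Qed.

Lemma bigO_w f k l : bigO f l -> (k <= l)%N -> bigO f k.
Proof. by move=> H kl; apply: (bigO_weak kl H). Qed.

Lemma bigO_mulW q f (g : R -> 'M[R]_(p,q)) k l o :
  bigO f k -> bigO g l -> (o <= k + l)%N -> bigO (fun t => f t *m g t) o.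
Proof. by move=> Hf Hg ok; apply: (bigO_weak ok); apply: bigO_mul. Qed.

Lemma bigO_tpowW f k l o : bigO f k -> (o <= l + k)%N -> bigO (fun t => t ^+ l *: f t) o.
Proof. by move=> Hf ok; apply: (bigO_weak ok); apply: bigO_tpow. Qed.

Lemma bigO_tW f k o : bigO f k -> (o <= k.+1)%N -> bigO (fun t => t *: f t) o.
Proof.
move=> Hf ok; have := bigO_tpowW f k 1 o Hf ok.
by apply: (bigO_ext (d:=1)) => // t _ _; rewrite expr1.
Qed.

Lemma bigO_tinvW f k l o : bigO f k -> (l + o <= k)%N -> bigO (fun t => (t ^+ l)^-1 *: f t) o.
Proof. by move=> Hf ok; apply: bigO_tinv; apply: (bigO_weak ok). Qed.

Lemma bigO_tinv1W f k o : bigO f k -> (o.+1 <= k)%N -> bigO (fun t => t^-1 *: f t) o.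
Proof.
move=> Hf ok; have := bigO_tinvW f k 1 o Hf ok.
by apply: (bigO_ext (d:=1)) => // t _ _; rewrite expr1.
Qed.
End OhW.

Arguments bigO_extW {R m p f g k d}.
Arguments bigO_w {R m p f k l}.
Arguments bigO_mulW {R m p q f g k l o}.
Arguments bigO_tpowW {R m p f k} l {o}.
Arguments bigO_tW {R m p f k o}.
Arguments bigO_tinvW {R m p f k} l {o}.
Arguments bigO_tinv1W {R m p f k o}.
Section Sc.
Variable R : rcfType.

Lemma sc_inv (t x : R) : 0 < t -> t ^+ 2 * `|x| <= 1/2 ->
  `|(t ^- 2 - x)^-1 - t ^+ 2 - t ^+ 4 * x| <= 2 * x ^+ 2 * t ^+ 6.
Proof.
move=> t0 hx.
have hu : t ^+ 2 * x <= 1/2.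
  apply: le_trans hx; apply: ler_wpM2l; [by rewrite exprn_ge0 ?ltW | exact: ler_norm].
have w0 : 0 < 1 - t ^+ 2 * x by lra.
have tn : t != 0 by rewrite gt_eqF.
have wn : 1 - t ^+ 2 * x != 0 by rewrite gt_eqF.
have e : (t ^- 2 - x)^-1 - t ^+ 2 - t ^+ 4 * x = t ^+ 6 * x ^+ 2 / (1 - t ^+ 2 * x).
  have -> : t ^- 2 - x = (1 - t ^+ 2 * x) / t ^+ 2 by field; rewrite ?tn ?wn ?sn.
  by field; rewrite ?tn ?wn ?sn.
have h6 : 0 <= t ^+ 6 * x ^+ 2 by rewrite mulr_ge0 ?sqr_ge0 // exprn_ge0 // ltW.
rewrite e ger0_norm; last by rewrite divr_ge0 // ltW.
rewrite ler_pdivrMr //.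
have -> : 2 * x ^+ 2 * t ^+ 6 * (1 - t ^+ 2 * x) = (t ^+ 6 * x ^+ 2) * (2 * (1 - t ^+ 2 * x)) by ring.
rewrite ler_peMr //; lra.
Qed.

Lemma sc_sqrt (t x : R) : 0 < t -> t ^+ 2 * `|x| <= 1/2 ->
  `|(Num.sqrt (t ^- 2 - x))^-1 - t| <= 2 * `|x| * t ^+ 3.
Proof.
move=> t0 hx.
have hu : t ^+ 2 * x <= 1/2.
  apply: le_trans hx; apply: ler_wpM2l; [by rewrite exprn_ge0 ?ltW | exact: ler_norm].
have tn : t != 0 by rewrite gt_eqF.
have y0 : 0 < t ^- 2 - x.
  have -> : t ^- 2 - x = (1 - t ^+ 2 * x) / t ^+ 2 by field; rewrite ?tn ?wn ?sn.
  by rewrite divr_gt0 ?exprn_gt0 //; lra.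
set s := Num.sqrt _.
have s0 : 0 < s by rewrite sqrtr_gt0.
have sn : s != 0 by rewrite gt_eqF.
have ss : s ^+ 2 = t ^- 2 - x by rewrite sqr_sqrtr // ltW.
have ts : (t * s) ^+ 2 = 1 - t ^+ 2 * x.
  by rewrite exprMn ss; field.
have ts0 : 0 < t * s by rewrite mulr_gt0.
have e : s^-1 - t = t ^+ 2 * x * s^-1 / (1 + t * s).
  have h1 : 1 + t * s != 0 by rewrite gt_eqF //; lra.
  apply: (mulIf h1); rewrite mulfVK //.
  have -> : (s^-1 - t) * (1 + t * s) = s^-1 + t - t * t * s - t by field; rewrite ?tn ?wn ?sn.
  have -> : t ^+ 2 * x * s^-1 = (1 - (t * s) ^+ 2) * s^-1 by rewrite ts; ring.
  by field; rewrite ?tn ?wn ?sn ?h1.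
rewrite e normrM normrV ?unitfE ?gt_eqF //; last by lra.
rewrite [`|1 + _|]gtr0_norm; last by lra.
have is2 : s^-1 <= 2 * t.
  rewrite -(ler_pM2r s0) mulVf //.
  have : 1/2 <= (t * s) ^+ 2 by rewrite ts; lra.
  rewrite -mulrA; nra.
have q0 : 0 < s^-1 by rewrite invr_gt0.
have hx0 : 0 <= `|x| by [].
rewrite normrM normrM normrV ?unitfE // [`|t ^+ 2|]gtr0_norm ?exprn_gt0 // [`|s|]gtr0_norm //.
rewrite ler_pdivrMr; last by lra.
have h1 : t ^+ 2 * `|x| * s^-1 <= t ^+ 2 * `|x| * (2 * t).
  by apply: ler_wpM2l => //; rewrite mulr_ge0 // exprn_ge0 // ltW.
apply: (le_trans h1).
have -> : 2 * `|x| * t ^+ 3 * (1 + t * s) = t ^+ 2 * `|x| * (2 * t) * (1 + t * s) by ring.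
rewrite ler_peMr //; last lra.
by apply: mulr_ge0; [apply: mulr_ge0 => //; apply: exprn_ge0; apply: ltW | lra].
Qed.

Lemma sc_half (y : R) : 0 < y -> Num.sqrt y = (Num.sqrt y)^-1 * y.
Proof.
move=> y0; have s0 : 0 < Num.sqrt y by rewrite sqrtr_gt0.
have sn : Num.sqrt y != 0 by rewrite gt_eqF.
by rewrite -{3}(sqr_sqrtr (ltW y0)) expr2 mulKf.
Qed.
End Sc.

Section Dg.
Variables (R : rcfType) (n : nat).
Implicit Types a : 'rV[R]_n.

Lemma Alam_diag a lam : Alam a lam = diag_mx (\row_i (lam - a 0 i)).
Proof.
apply/matrixP => i j; rewrite !mxE.
by case: eqP => [->|_]; rewrite ?mulr1n ?mulr0n ?subr0.
Qed.

Lemma invmx_diag (d : 'rV[R]_n) : (forall i, d 0 i != 0) ->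
  invmx (diag_mx d) = diag_mx (\row_i (d 0 i)^-1).
Proof.
move=> hd.
have e : diag_mx d *m diag_mx (\row_i (d 0 i)^-1) = 1%:M.
  rewrite mulmx_diag; apply/matrixP => i j; rewrite !mxE.
  by case: eqP => [->|_]; rewrite ?mulr1n ?mulr0n // mulfV.
have [u _] := mulmx1_unit e.
by rewrite -[RHS](mulKmx u) e mulmx1.
Qed.

Lemma Ahalf_eq a lam : (forall i, a 0 i < lam) ->
  Ahalf a lam = Aminushalf a lam *m Alam a lam.
Proof.
move=> h; rewrite Alam_diag /Ahalf /Aminushalf mulmx_diag; congr diag_mx.
apply/rowP => i; rewrite !mxE; apply: sc_half; rewrite subr_gt0; exact: h.
Qed.

Definition Ssum a := \sum_i `|a 0 i|.

Lemma Ssum_ge a i : `|a 0 i| <= Ssum a.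
Proof.
rewrite /Ssum (bigD1 i) //= lerDl sumr_ge0 //.
Qed.

Lemma Ssum_ge0 a : 0 <= Ssum a.
Proof. by rewrite sumr_ge0. Qed.

Lemma small_a a : exists d : R, 0 < d /\ forall t, 0 < t -> t < d ->
  t <= 1 /\ forall i, t ^+ 2 * `|a 0 i| <= 1/2.
Proof.
have S0 := Ssum_ge0 a.
exists (Num.min 1 (2 * (Ssum a + 1))^-1); split.
  by rewrite lt_min ltr01 invr_gt0; lra.
move=> t t0; rewrite lt_min => /andP[t1 tS]; split; first exact: ltW.
move=> i; have hi := Ssum_ge a i.
have hS : t * (2 * (Ssum a + 1)) < 1.
  by rewrite -ltr_pdivlMr //; lra.
have h1 : t ^+ 2 * `|a 0 i| <= t * `|a 0 i|.
  rewrite expr2 -mulrA ler_pM2l // ler_piMl //; lra.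
have h2 : t * `|a 0 i| <= t * Ssum a by rewrite ler_pM2l.
lra.
Qed.

Lemma lam_big a t : 0 < t -> (forall i, t ^+ 2 * `|a 0 i| <= 1/2) ->
  forall i, a 0 i < t ^- 2.
Proof.
move=> t0 h i.
have : t ^+ 2 * a 0 i <= 1/2 by apply: le_trans (h i); rewrite ler_pM2l ?exprn_gt0 // ler_norm.
have t2 : 0 < t ^+ 2 by rewrite exprn_gt0.
rewrite -(ltr_pM2l t2) mulfV ?gt_eqF //; lra.
Qed.

Lemma bigO_D a : bigO (fun t : R => invmx (Alam a (t ^- 2)) - (t ^+ 2 *: 1%:M + t ^+ 4 *: Amat a)) 6.
Proof.
have [d [d0 hd]] := small_a a.
apply: (@bigO_intro _ _ _ _ _ (2 * Ssum a ^+ 2) d) => // t t0 td i j.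
have [_ h] := hd t t0 td.
have hl := @lam_big a t t0 h.
rewrite Alam_diag invmx_diag; last by move=> k; rewrite mxE subr_eq0 gt_eqF // hl.
rewrite /Amat !mxE; case: (i == j); rewrite ?mulr1n ?mulr0n ?mulr1 ?mulr0.
  rewrite opprD addrA.
  apply: (le_trans (@sc_inv _ t (a 0 i) t0 (h i))).
  rewrite ler_pM2r ?exprn_gt0 // ler_pM2l //.
  have h1 := Ssum_ge a i; have h2 := ler_norm (a 0 i); have h3 := ler_norm (- a 0 i).
  rewrite normrN in h3; nra.
rewrite addr0 subr0 normr0 mulr_ge0 ?exprn_ge0 ?sqr_ge0 ?Ssum_ge0 //; last exact: ltW.
by rewrite mulr_ge0 // sqr_ge0.
Qed.

Lemma bigO_B a : bigO (fun t : R => Aminushalf a (t ^- 2) - t *: 1%:M) 3.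
Proof.
have [d [d0 hd]] := small_a a.
apply: (@bigO_intro _ _ _ _ _ (2 * Ssum a) d) => // t t0 td i j.
have [_ h] := hd t t0 td.
rewrite /Aminushalf !mxE; case: (i == j); rewrite ?mulr1n ?mulr0n ?mulr1 ?mulr0.
  apply: (le_trans (@sc_sqrt _ t (a 0 i) t0 (h i))).
  rewrite ler_pM2r ?exprn_gt0 // ler_pM2l //; exact: Ssum_ge.
rewrite subr0 normr0 mulr_ge0 ?exprn_ge0 //; [by rewrite mulr_ge0 // Ssum_ge0 | exact: ltW].
Qed.
End Dg.

Section Id.
Variable R : rcfType.

Lemma lZl m p q (a : R) (A : 'M[R]_(m,p)) (B : 'M[R]_(p,q)) : (a *: A) *m B = a *: (A *m B).
Proof. by rewrite scalemxAl. Qed.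
Lemma lZr m p q (a : R) (A : 'M[R]_(m,p)) (B : 'M[R]_(p,q)) : A *m (a *: B) = a *: (A *m B).
Proof. by rewrite scalemxAr. Qed.

Ltac mnorm := rewrite ?(mulmxDl, mulmxDr, mulmxBl, mulmxBr, mulNmx, mulmxN, lZl, lZr,
   mul1mx, mulmx1, mulmxA, scalerDr, scalerBr, scalerA, scalerN, opprD, opprK).
Ltac mring := apply/matrixP => i j; rewrite !mxE; ring.

Lemma ab2 m p (y z : 'M[R]_(m,p)) : y = z + (y - z).
Proof. mring. Qed.
Lemma ab3 m p (y z w : 'M[R]_(m,p)) : y = z + (w + (y - z - w)).
Proof. mring. Qed.
Lemma ab4 m p (y z w : 'M[R]_(m,p)) : y - z = w + (y - (z + w)).
Proof. mring. Qed.
Lemma ab5 m p (y z w : 'M[R]_(m,p)) : z - y = z - w - (y - w).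
Proof. mring. Qed.
Lemma ab6 m p (y z w : 'M[R]_(m,p)) : (z + y) - (z - w) = y + w.
Proof. mring. Qed.
Lemma trD m p (s : R) (y z : 'M[R]_(m,p)) : (s *: y + z)^T = s *: y^T + z^T.
Proof. mring. Qed.

Lemma id_E n r (s u : R) (X : 'M[R]_(n,r)) (D A : 'M[R]_n) : X^T *m X = 1%:M ->
  X^T *m (D - (s *: 1%:M + u *: A)) *m X = X^T *m D *m X - s *: 1%:M - u *: (X^T *m A *m X).
Proof. move=> hX; mnorm; rewrite hX; mring. Qed.

Lemma id_V n r q (s : R) (X : 'M[R]_(n,r)) (P : 'M[R]_(n,q)) (D : 'M[R]_n) :
  X^T *m (D - s *: 1%:M) *m P = X^T *m D *m P - s *: (X^T *m P).
Proof. mnorm; mring. Qed.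

Lemma id_G1 r (t : R) (H N : 'M[R]_r) : t != 0 ->
  t *: ((t^-1 *: 1%:M + H) - (t^-1 *: 1%:M - (t / 2) *: N)) = 2^-1 *: ((2 * t) *: H + t^+2 *: N).
Proof. move=> tn; mnorm; apply/matrixP => i j; rewrite !mxE. by field; rewrite ?tn. Qed.

Lemma id_ric r (t : R) (H M E K V1 V1T Q W1 : 'M[R]_r) : t != 0 ->
 (2 * t) *: H + t^+2 *: (M + Q) =
 ((t^-1 *: 1%:M + H) *m (t^+2 *: 1%:M + (t^+4 *: M + E)) *m (t^-1 *: 1%:M + H)
  + (t^-1 *: 1%:M + H) *m (t^+2 *: K + V1) + (- (t^+2 *: K) + V1T) *m (t^-1 *: 1%:M + H)
  - (1%:M - t^+2 *: Q - W1)) -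
  (t^-2 *: E + t^-1 *: (H *m (t^+4 *: M + E) + (t^+4 *: M + E) *m H)
   + H *m (t^+2 *: 1%:M + (t^+4 *: M + E)) *m H + t^-1 *: (V1 + V1T)
   + t^+2 *: (H *m K - K *m H) + H *m V1 + V1T *m H + W1).
Proof.
move=> tn; mnorm.
apply/matrixP => i j; rewrite !mxE. by field; rewrite ?tn.
Qed.

Lemma id_X n r (t : R) (B3 : 'M[R]_n) (X P : 'M[R]_(n,r)) (H : 'M[R]_r) : t != 0 ->
  (t *: 1%:M + B3) *m (P + X *m (t^-1 *: 1%:M + H)) - (X + t *: P) =
  t *: (X *m H) + B3 *m P + t^-1 *: (B3 *m X) + B3 *m X *m H.
Proof.
move=> tn; mnorm.
apply/matrixP => i j; rewrite !mxE. by field; rewrite ?tn.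
Qed.

Lemma id_P n r (t : R) (B3 A : 'M[R]_n) (X P : 'M[R]_(n,r)) (H M Q : 'M[R]_r) : t != 0 ->
  - ((t *: 1%:M + B3) *m (t^-2 *: 1%:M - A) *m X)
  + (t *: 1%:M + B3) *m (P + X *m (t^-1 *: 1%:M + H)) *m (t^-1 *: 1%:M + H)
  - (P + t *: (A *m X + X *m (- M - Q))) =
  t *: (P *m H) + 2%:R *: (X *m (H + (t / 2) *: (M + Q))) + t *: (X *m H *m H)
  + t^-1 *: (B3 *m P) + B3 *m (A *m X + X *m (- M - Q))
  + B3 *m (P *m H) + 2%:R *: (t^-1 *: (B3 *m (X *m (H + (t / 2) *: (M + Q)))))
  + B3 *m (X *m H *m H).
Proof.
move=> tn; mnorm.
apply/matrixP => i j; rewrite !mxE. by field; rewrite ?tn.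
Qed.
End Id.

Theorem mainTheorem17 (R : rcfType) (n r : nat) (a : 'rV[R]_n)
  (X P : 'M[R]_(n, r))
  (hXX : X^T *m X = 1%:M)
  (hXP : X^T *m P + P^T *m X = 0)
  (Gam : R -> 'M[R]_r)
  (delta0 : R) (hdelta0 : 0 < delta0)
  (hbranch : forall tau : R, 0 < tau -> tau < delta0 ->
     riccati a (tau ^- 2) X P (Gam tau))
  (hGam : bigO (fun tau => Gam tau - tau^-1 *: 1%:M) 1) :
  let A := Amat a in
  let Lambda := - (X^T *m A *m X) - P^T *m P in
  let Xdot := P in
  let Pdot := A *m X + X *m Lambda in
  bigO (fun tau => Gam tau
          - (tau^-1 *: 1%:M - (tau / 2) *: (X^T *m A *m X + P^T *m P))) 2
  /\ bigO (fun tau => Xtilde a (tau ^- 2) X P (Gam tau) - (X + tau *: Xdot)) 2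
  /\ bigO (fun tau => Ptilde a (tau ^- 2) X P (Gam tau) - (P + tau *: Pdot)) 2.
Proof.
cbv zeta.
set M := X^T *m Amat a *m X.
set Q := P^T *m P.
set K := X^T *m P.
have hKT : K^T = - K.
  rewrite /K trmx_mul trmxK; apply/eqP; rewrite -addr_eq0 addrC; exact/eqP.
pose D := fun t : R => invmx (Alam a (t ^- 2)).
have hD : bigO (fun t => D t - (t^+2 *: 1%:M + t^+4 *: Amat a)) 6 := bigO_D _ _ a.
have eD : forall t, invmx (Alam a (t ^- 2)) = D t by [].
clearbody D.
have hD1 : bigO (fun t => D t - t^+2 *: 1%:M) 4.
  apply: (bigO_ext (d:=1) ltr01 (g := fun t => t^+4 *: Amat a + (D t - (t^+2 *: 1%:M + t^+4 *: Amat a)))).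
    by move=> t _ _; rewrite -ab4.
  by apply: bigO_add; [apply: bigO_tpowW 4 (bigO_cst _) _ | apply: bigO_w hD _].
pose E' := fun t => X^T *m D t *m X - t^+2 *: 1%:M - t^+4 *: M.
have hE' : bigO E' 6.
  have := bigO_mul (bigO_mul (bigO_cst X^T) hD) (bigO_cst X).
  by apply: (bigO_ext (d:=1)) => // t _ _; rewrite /E' id_E.
have eE : forall t, X^T *m D t *m X = t^+2 *: 1%:M + (t^+4 *: M + E' t).
  by move=> t; rewrite /E'; apply: ab3.
pose V1 := fun t => X^T *m D t *m P - t^+2 *: K.
have hV1 : bigO V1 4.
  have := bigO_mul (bigO_mul (bigO_cst X^T) hD1) (bigO_cst P).
  by apply: (bigO_ext (d:=1)) => // t _ _; rewrite /V1 id_V.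
have eV : forall t, X^T *m D t *m P = t^+2 *: K + V1 t by move=> t; apply: ab2.
have eVT : forall t, (X^T *m D t *m P)^T = - (t^+2 *: K) + (V1 t)^T.
  by move=> t; rewrite eV trD hKT scalerN.
pose W1 := fun t => P^T *m D t *m P - t^+2 *: Q.
have hW1 : bigO W1 4.
  have := bigO_mul (bigO_mul (bigO_cst P^T) hD1) (bigO_cst P).
  by apply: (bigO_ext (d:=1)) => // t _ _; rewrite /W1 id_V.
have eW : forall t, 1%:M - P^T *m D t *m P = 1%:M - t^+2 *: Q - W1 t.
  by move=> t; rewrite /W1; apply: ab5.
clearbody E' V1 W1.
pose H := fun t => Gam t - t^-1 *: 1%:M.
have hH : bigO H 1 := hGam.
have eG : forall t, Gam t = t^-1 *: 1%:M + H t by move=> t; apply: ab2.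
clearbody H.
have hF1 : bigO (fun t => t^+4 *: M + E' t) 4.
  by apply: bigO_add (bigO_tpowW 4 (bigO_cst M) _) (bigO_w hE' _).
have hU : bigO (fun t => t^+2 *: 1%:M + (t^+4 *: M + E' t)) 2.
  by apply: bigO_add (bigO_tpowW 2 (bigO_cst 1%:M) _) (bigO_w hF1 _).
have hP1 : bigO (fun t => Gam t - (t^-1 *: 1%:M - (t / 2) *: (M + Q))) 2.
  have hBr : bigO (fun t => t^-2 *: E' t + t^-1 *: (H t *m (t^+4 *: M + E' t) + (t^+4 *: M + E' t) *m H t)
     + H t *m (t^+2 *: 1%:M + (t^+4 *: M + E' t)) *m H t + t^-1 *: (V1 t + (V1 t)^T)
     + t^+2 *: (H t *m K - K *m H t) + H t *m V1 t + (V1 t)^T *m H t + W1 t) 3.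
    apply: bigO_add; last by apply: bigO_w hW1 _.
    apply: bigO_add; last by apply: bigO_mulW (bigO_trmx hV1) hH _.
    apply: bigO_add; last by apply: bigO_mulW hH hV1 _.
    apply: bigO_add; last first.
      apply: (bigO_tpowW 2 (k := 1)) => //; apply: bigO_sub.
        exact: (bigO_mul hH (bigO_cst K)).
      exact: (bigO_mul (bigO_cst K) hH).
    apply: bigO_add; last by apply: bigO_tinv1W (bigO_add hV1 (bigO_trmx hV1)) _.
    apply: bigO_add; last by apply: bigO_mulW (bigO_mul hH hU) hH _.
    apply: bigO_add; last by apply: bigO_tinv1W (bigO_add (bigO_mul hH hF1) (bigO_mul hF1 hH)) _.
    have := bigO_tinvW 2 (o:=3) hE' isT. exact.
  have h3 : bigO (fun t => t *: (Gam t - (t^-1 *: 1%:M - (t / 2) *: (M + Q)))) 3.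
    apply: (bigO_extW (bigO_scal (2^-1) (bigO_opp hBr)) hdelta0) => t t0 td.
    have tn : t != 0 by rewrite gt_eqF.
    have [_ hric] := hbranch t t0 td.
    rewrite /Umat /Vmat /Wmat eD eVT eV eE eW !eG in hric.
    have := @id_ric _ _ t (H t) M (E' t) K (V1 t) ((V1 t)^T) Q (W1 t) tn.
    rewrite hric sub0r => hid.
    by rewrite eG id_G1 // hid.
  have := bigO_tinv1W (o:=2) h3 isT.
  apply: (bigO_ext (d:=1)) => // t t0 _.
  by rewrite scalerA mulVf ?scale1r // gt_eqF.
have [da [da0 hda]] := small_a _ _ a.
pose B3 := fun t => Aminushalf a (t ^- 2) - t *: 1%:M.
have hB3 : bigO B3 3 := bigO_B _ _ a.
have eB : forall t, Aminushalf a (t ^- 2) = t *: 1%:M + B3 t by move=> t; apply: ab2.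
clearbody B3.
have hH2 : bigO (fun t => H t + (t / 2) *: (M + Q)) 2.
  by apply: (bigO_extW hP1 ltr01) => t _ _; rewrite eG ab6.
split; first exact: hP1.
split.
  pose RX := fun t => t *: (X *m H t) + B3 t *m P + t^-1 *: (B3 t *m X) + B3 t *m X *m H t.
  have hRX : bigO RX 2.
    apply: bigO_add; last by apply: bigO_mulW (bigO_mul hB3 (bigO_cst X)) hH _.
    apply: bigO_add; last first.
      have := bigO_tinv1W (o:=2) (bigO_mul hB3 (bigO_cst X)) isT; exact.
    apply: bigO_add; last by apply: bigO_mulW hB3 (bigO_cst P) _.
    have := bigO_tW (o:=2) (bigO_mul (bigO_cst X) hH) isT; exact.
  apply: (bigO_extW hRX ltr01) => t t0 _.
  by rewrite /RX /Xtilde eB eG id_X // gt_eqF.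
pose RP := fun t => t *: (P *m H t) + 2%:R *: (X *m (H t + (t / 2) *: (M + Q))) + t *: (X *m H t *m H t)
  + t^-1 *: (B3 t *m P) + B3 t *m (Amat a *m X + X *m (- M - Q))
  + B3 t *m (P *m H t) + 2%:R *: (t^-1 *: (B3 t *m (X *m (H t + (t / 2) *: (M + Q)))))
  + B3 t *m (X *m H t *m H t).
have hRP : bigO RP 2.
  apply: bigO_add; last by apply: bigO_mulW hB3 (bigO_mul (bigO_mul (bigO_cst X) hH) hH) _.
  apply: bigO_add; last first.
    apply: bigO_scal.
    have := bigO_tinv1W (o:=2) (bigO_mul hB3 (bigO_mul (bigO_cst X) hH2)) isT; exact.
  apply: bigO_add; last by apply: bigO_mulW hB3 (bigO_mul (bigO_cst P) hH) _.
  apply: bigO_add; last by apply: bigO_mulW hB3 (bigO_cst _) _.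
  apply: bigO_add; last first.
    have := bigO_tinv1W (o:=2) (bigO_mul hB3 (bigO_cst P)) isT; exact.
  apply: bigO_add; last first.
    have := bigO_tW (o:=2) (bigO_mul (bigO_mul (bigO_cst X) hH) hH) isT; exact.
  apply: bigO_add; last first.
    by apply: bigO_scal; apply: bigO_mulW (bigO_cst X) hH2 _.
  have := bigO_tW (o:=2) (bigO_mul (bigO_cst P) hH) isT; exact.
apply: (bigO_extW hRP da0) => t t0 td.
have [_ h] := hda t t0 td.
have eAl : Alam a (t ^- 2) = t ^- 2 *: 1%:M - Amat a by rewrite /Alam scalemx1.
rewrite /Ptilde (@Ahalf_eq _ _ a _ (@lam_big _ _ a t t0 h)) eAl eB eG /RP.
by rewrite id_P // gt_eqF.
Qed.
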